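(* Let $\mathbf{k}$ be an algebraically closed field of characteristic zero, $\mathcal{A}=\mathbf{k}[x_1,\ldots,x_n]$, $\mathcal{V}=\bigoplus_{i=1}^n\mathcal{A}\frac{\partial}{\partial x_i}$, $\mathcal{L}_+\subset\mathcal{V}$ the subalgebra of vector fields vanishing at the origin, and $\mathcal{D}$ the Weyl algebra. Let $\varphi:\mathcal{A}\# U(\mathcal{V})\to\mathcal{D}\otimes U(\mathcal{L}_+)$ be the algebra homomorphism which is the natural embedding $f\mapsto f\otimes1$ on $\mathcal{A}$ and satisfies $\varphi(x^k\frac{\partial}{\partial x_p})=x^k\frac{\partial}{\partial x_p}\otimes 1+\sum_{0<m\leq k}\binom{k}{m}x^{k-m}\otimes x^m\frac{\partial}{\partial x_p}$, and let $\psi:\mathcal{D}\otimes U(\mathcal{L}_+)\to\mathcal{A}\# U(\mathcal{V})$ be the algebra homomorphism with $\psi(x^r\partial^s\otimes 1)=x^r\#(\frac{\partial}{\partial x_1})^{s_1}\cdots(\frac{\partial}{\partial x_n})^{s_n}$ and $\psi(1\otimes x^m\frac{\partial}{\partial x_p})=\sum_{0\leq k\leq m}(-1)^{m-k}\binom{m}{k}x^{m-k}\# x^k\frac{\partial}{\partial x_p}$ for $m\neq 0$. Then $\psi\circ\varphi$ and $\varphi\circ\psi$ are the identity maps, i.e., $\varphi$ and $\psi$ are mutually inverse.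
   Context: Multi-index notation: $x^k=x_1^{k_1}\cdots x_n^{k_n}$, $\partial^s=(\partial/\partial x_1)^{s_1}\cdots(\partial/\partial x_n)^{s_n}$; $m\le k$ componentwise, $0<m\le k$ means additionally $m\ne0$; $\binom{k}{m}=\prod_i\binom{k_i}{m_i}$; $(-1)^{s}=(-1)^{s_1+\cdots+s_n}$. The smash product $\mathcal{A}\# U(\mathcal{V})$ is $\mathcal{A}\otimes U(\mathcal{V})$ with product $(f\# u)(g\# v)=\sum_i f\,u_i^{(1)}(g)\# u_i^{(2)}v$, $\Delta(u)=\sum_i u_i^{(1)}\otimes u_i^{(2)}$ the coproduct; in particular $(1\#\eta)(f\#1)=f\#\eta+\eta(f)\#1$. *)

(* Defs.v *)
From HB Require Import structures.
From mathcomp Require Import all_boot all_order all_algebra.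
From mathcomp Require Import mpoly.
Set Implicit Arguments. Unset Strict Implicit. Unset Printing Implicit Defensive.
Import Order.TTheory GRing.Theory Num.Theory.
Local Open Scope ring_scope.

(* Polynomial vector fields  V = (+)_i A d/dx_i, as n-tuples of polynomials. *)
Definition VF (F : fieldType) (n : nat) := {ffun 'I_n -> {mpoly F[n]}}.

Definition vapp (F : fieldType) n (e : VF F n) (f : {mpoly F[n]}) : {mpoly F[n]} :=
  \sum_(i < n) e i * mderiv i f.

Definition vbr (F : fieldType) n (e x : VF F n) : VF F n :=
  [ffun i => vapp e (x i) - vapp x (e i)].

Definition vanish0 (F : fieldType) n (e : VF F n) : Prop :=
  forall i, (e i).@[fun _ => 0] = 0.

Definition vfm (F : fieldType) n (k : 'X_{1..n}) (p : 'I_n) : VF F n :=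
  [ffun i => if i == p then 'X_[k] else 0].
Arguments vfm {F n} k p.

Definition is_alg_hom (F : fieldType) (A B : algType F) (h : A -> B) : Prop :=
  [/\ h 1 = 1, forall x y, h (x * y) = h x * h y
    & forall (a : F) x y, h (a *: x + y) = a *: h x + h y].

Definition is_lin (F : fieldType) (U B : lmodType F) (g : U -> B) : Prop :=
  forall (a : F) x y, g (a *: x + y) = a *: g x + g y.

(* ---- the smash product A # U(V), characterized by its universal property:
   generated by an algebra map iA : A -> S and a Lie map iV : V -> S with
   (1#eta)(f#1) = f#eta + eta(f)#1, and universal among such data. ---- *)
Definition smash_rel (F : fieldType) n (R : algType F)
    (fA : {mpoly F[n]} -> R) (gV : VF F n -> R) : Prop :=
  [/\ is_alg_hom fA, is_lin gV,
      forall e x, gV (vbr e x) = gV e * gV x - gV x * gV e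
    & forall e f, gV e * fA f = fA f * gV e + fA (vapp e f)].

Definition is_smash_product (F : fieldType) n (S : algType F)
    (iA : {mpoly F[n]} -> S) (iV : VF F n -> S) : Prop :=
  smash_rel iA iV /\
  forall (R : algType F) (fA : {mpoly F[n]} -> R) (gV : VF F n -> R),
    smash_rel fA gV ->
    (exists h : S -> R, [/\ is_alg_hom h, forall f, h (iA f) = fA f
                                        & forall e, h (iV e) = gV e]) /\
    (forall h1 h2 : S -> R, is_alg_hom h1 -> is_alg_hom h2 ->
       (forall f, h1 (iA f) = fA f) -> (forall e, h1 (iV e) = gV e) ->
       (forall f, h2 (iA f) = fA f) -> (forall e, h2 (iV e) = gV e) ->
       h1 =1 h2).

(* ---- D (x) U(L_+): D the Weyl algebra on x_i, d_i; characterized by the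
   universal property of the tensor product of the Weyl algebra (given by its
   presentation) with U(L_+).  X i = x_i (x) 1, P i = d/dx_i (x) 1,
   jL e = 1 (x) e for e in L_+ (values of jL outside L_+ are irrelevant). ---- *)
Definition weylU_rel (F : fieldType) n (R : algType F)
    (X P : 'I_n -> R) (gL : VF F n -> R) : Prop :=
  [/\ (forall i j, X i * X j = X j * X i) /\
      (forall i j, P i * P j = P j * P i),
      forall i j, P i * X j - X j * P i = (i == j)%:R,
      forall (a : F) e x, vanish0 e -> vanish0 x ->
        gL (a *: e + x) = a *: gL e + gL x,
      forall e x, vanish0 e -> vanish0 x ->
        gL (vbr e x) = gL e * gL x - gL x * gL e
    & forall e i, vanish0 e -> gL e * X i = X i * gL e /\ gL e * P i = P i * gL e].

Definition is_weyl_tensor_UL (F : fieldType) n (T : algType F)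
    (X P : 'I_n -> T) (jL : VF F n -> T) : Prop :=
  weylU_rel X P jL /\
  forall (R : algType F) (Xr Pr : 'I_n -> R) (gL : VF F n -> R),
    weylU_rel Xr Pr gL ->
    (exists h : T -> R, [/\ is_alg_hom h, forall i, h (X i) = Xr i,
                          forall i, h (P i) = Pr i
                        & forall e, vanish0 e -> h (jL e) = gL e]) /\
    (forall h1 h2 : T -> R, is_alg_hom h1 -> is_alg_hom h2 ->
       (forall i, h1 (X i) = Xr i) -> (forall i, h1 (P i) = Pr i) ->
       (forall e, vanish0 e -> h1 (jL e) = gL e) ->
       (forall i, h2 (X i) = Xr i) -> (forall i, h2 (P i) = Pr i) ->
       (forall e, vanish0 e -> h2 (jL e) = gL e) ->
       h1 =1 h2).

Definition Xmon (R : ringType) n (Y : 'I_n -> R) (k : 'X_{1..n}) : R :=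
  \prod_(i < n) Y i ^+ k i.

Definition embA (F : fieldType) n (R : algType F) (Y : 'I_n -> R)
    (f : {mpoly F[n]}) : R :=
  \sum_(m <- msupp f) f@_m *: Xmon Y m.

Definition mbin n (k m : 'X_{1..n}) : nat := \prod_(i < n) 'C(k i, m i).

(* Main.v *)
Require Import Defs.
From HB Require Import structures.
From mathcomp Require Import all_boot all_order all_algebra.
From mathcomp Require Import mpoly.
From mathcomp Require Import ring zify.
Import GRing.Theory.
Set Implicit Arguments. Unset Strict Implicit. Unset Printing Implicit Defensive.
Local Open Scope ring_scope.

Lemma binbin b t a : (a <= t)%N -> (a <= b)%N ->
  ('C(b, t) * 'C(t, a) = 'C(b, a) * 'C(b - a, t - a))%N.
Proof.
move=> hat ab; case: (leqP t b) => tb; last first.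
  by rewrite (bin_small tb) (@bin_small (b - a) (t - a)) ?mul0n ?muln0 //; lia.
have h1 := bin_fact tb; have h2 := bin_fact hat; have h3 := bin_fact ab.
have h4 : (t - a <= b - a)%N by lia.
have h5 := bin_fact h4.
have e : (b - a - (t - a) = b - t)%N by lia.
rewrite e in h5.
apply/eqP; rewrite -(@eqn_pmul2r (a`! * (t - a)`! * (b - t)`!)); last first.
  by rewrite !muln_gt0 !fact_gt0.
apply/eqP; transitivity (b`!).
  rewrite -h1 -h2; ring.
rewrite -h3 -h5; ring.
Qed.

Lemma sv1 (R : comRingType) N a b : (b <= N)%N ->
  \sum_(t < N.+1) (-1) ^+ (t - a) * ('C(b, t) * 'C(t, a))%:R = (a == b)%:R :> R.
Proof.
move=> bN.
case: (leqP a b) => ab; last first.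
  rewrite big1 ?(gtn_eqF ab) // => t _.
  case: (leqP a t) => hat; first by rewrite bin_small ?mul0n ?mulr0 //; lia.
  by rewrite (bin_small hat) muln0 mulr0.
rewrite -(big_mkord xpredT (fun t => (-1) ^+ (t - a) * ('C(b, t) * 'C(t, a))%:R)).
rewrite (big_cat_nat (n := a)) //=; last by lia.
rewrite big_nat_cond big1 ?add0r; last first.
  by move=> t /andP [/andP [_ ta] _]; rewrite (bin_small ta) muln0 mulr0.
rewrite -{1}(add0n a) big_addn.
rewrite (eq_bigr (fun s => (-1) ^+ s * ('C(b, a) * 'C(b - a, s))%:R)); last first.
  move=> s _; rewrite binbin ?leq_addl // addnK //.
rewrite big_mkord.
pose H := fun s : nat => (-1) ^+ s * ('C(b, a) * 'C(b - a, s))%:R : R.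
have e1 : \sum_(i < N.+1 - a) H i = \sum_(i < (b - a).+1) H i.
  rewrite (big_ord_widen (N.+1 - a) H (n1 := (b - a).+1)); last by lia.
  rewrite [LHS](bigID (fun i : 'I__ => (i < (b - a).+1)%N)) /= [X in _ + X]big1 ?addr0 //.
  by move=> i; rewrite -leqNgt => hi; rewrite /H (bin_small hi) muln0 mulr0.
rewrite e1 /H.
have -> : (a == b)%:R = ('C(b, a))%:R * (-1 + 1 : R) ^+ (b - a).
  rewrite addNr expr0n subn_eq0; case: (eqVneq a b) => [->|neq]; first by rewrite binn leqnn mulr1.
  by rewrite leqNgt ltn_neqAle neq ab /= mulr0.
rewrite exprD1n.
rewrite mulr_sumr; apply: eq_bigr => i _.
rewrite natrM -mulr_natr; ring.
Qed.


Lemma sv2 (R : comRingType) N a b : (b <= N)%N ->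
  \sum_(t < N.+1) (-1) ^+ (b - t) * ('C(b, t) * 'C(t, a))%:R = (a == b)%:R :> R.
Proof.
move=> bN.
rewrite (eq_bigr (fun t : 'I_N.+1 => (-1) ^+ (b - a) * ((-1) ^+ (t - a) * ('C(b, t) * 'C(t, a))%:R))); last first.
  move=> t _; case: (leqP a t) => hat; last by rewrite (bin_small hat) muln0 !mulr0.
  case: (leqP t b) => tb; last by rewrite (bin_small tb) mul0n !mulr0.
  have -> : (b - a = (b - t) + (t - a))%N by lia.
  have sq : (-1) ^+ (t - a) * (-1) ^+ (t - a) = 1 :> R by rewrite -exprMn mulrNN mulr1 expr1n.
  by rewrite exprD -mulrA (mulrA ((-1) ^+ (t - a))) sq mul1r.
by rewrite -mulr_sumr sv1 //; case: eqP => [->|]; rewrite ?subnn ?expr0 ?mul1r ?mulr0.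
Qed.

Definition mon n N (f : {ffun 'I_n -> 'I_N}) : 'X_{1..n} := [multinom (f i : nat) | i < n].
Definition lef n N (f : {ffun 'I_n -> 'I_N}) (m : 'X_{1..n}) := [forall i, (f i <= m i)%N].

Lemma lefE n N (f : {ffun 'I_n -> 'I_N}) m : lef f m = (mon f <= m)%MM.
Proof.
apply/forallP/mnm_lepP => H i; have := H i; by rewrite mnmE.
Qed.

Lemma mdeg_le n (m k : 'X_{1..n}) : (m <= k)%MM -> (mdeg m <= mdeg k)%N.
Proof. by move/mnm_lepP => H; rewrite !mdegE; apply: leq_sum => i _. Qed.

Lemma coord_le n (k : 'X_{1..n}) i : (k i <= mdeg k)%N.
Proof. by rewrite mdegE (bigD1 i) //= leq_addr. Qed.

Lemma convQ (M : nmodType) n d N (k : 'X_{1..n}) (Q : pred 'X_{1..n}) (G : 'X_{1..n} -> M) :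
  (mdeg k <= d)%N -> (mdeg k <= N)%N ->
  \sum_(m : 'X_{1..n < d.+1} | (m <= k)%MM && Q m) G m =
  \sum_(f : {ffun 'I_n -> 'I_N.+1} | lef f k && Q (mon f)) G (mon f).
Proof.
move=> hd hN.
pose h (f : {ffun 'I_n -> 'I_N.+1}) : 'X_{1..n < d.+1} := insubd bm0 (mon f).
pose h' (m : 'X_{1..n < d.+1}) : {ffun 'I_n -> 'I_N.+1} := [ffun i => inord (m i)].
have coord : forall (m : 'X_{1..n}) i, (m <= k)%MM -> (m i <= N)%N.
  move=> m i /mnm_lepP H; apply: leq_trans (H i) _; exact: leq_trans (coord_le k i) hN.
have monh' : forall m : 'X_{1..n < d.+1}, (m <= k)%MM -> mon (h' m) = m.
  move=> m mk; apply/mnmP => i; rewrite mnmE ffunE inordK // ltnS; exact: coord.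
have hmon : forall f, lef f k -> bmnm (h f) = mon f.
  move=> f; rewrite lefE => lf; rewrite /h val_insubd.
  by rewrite (leq_ltn_trans (mdeg_le lf)) // ltnS.
have hmonv : forall f, lef f k -> val (h f) = mon f by exact: hmon.
rewrite (reindex_onto h h'); last first.
  move=> m /andP [mk _]; apply: val_inj.
  rewrite hmonv; first exact: monh'.
  by rewrite lefE monh'.
apply: eq_big => [f|f /andP [/andP [hk _] /eqP e]]; last first.
  have e2 : mon f = h f by rewrite -{1}e; exact: monh'.
  by rewrite e2.
apply/idP/idP.
  case/andP => /andP [hk q] /eqP e.
  have e2 : mon f = h f by rewrite -{1}e; exact: monh'.
  by rewrite lefE e2 hk q.
case/andP => lf q; rewrite hmon // -lefE lf q /=.
apply/eqP/ffunP => i; rewrite ffunE hmon // mnmE; apply: val_inj => /=.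
by rewrite inordK.
Qed.

Lemma conv (M : nmodType) n d N (k : 'X_{1..n}) (G : 'X_{1..n} -> M) :
  (mdeg k <= d)%N -> (mdeg k <= N)%N ->
  \sum_(m : 'X_{1..n < d.+1} | (m <= k)%MM) G m =
  \sum_(f : {ffun 'I_n -> 'I_N.+1} | lef f k) G (mon f).
Proof.
move=> hd hN; have := convQ xpredT G hd hN.
by rewrite (eq_bigl _ _ (fun m => andbT _)) (eq_bigl (fun f => lef f k) _ (fun m => andbT _)).
Qed.

Section FW.
Variables (n N : nat).
Local Notation Fm := {ffun 'I_n -> 'I_N.+1}.

Lemma mon_eq0 (f : Fm) : (mon f == 0%MM) = (f == [ffun => ord0]).
Proof.
apply/eqP/eqP => [/mnmP H|->].
  apply/ffunP => i; have := H i; rewrite mnmE mnm0E ffunE => e; exact: val_inj.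
by apply/mnmP => i; rewrite mnmE mnm0E ffunE.
Qed.

Lemma split0 (M : nmodType) (m : 'X_{1..n}) (G : Fm -> M) :
  \sum_(g : Fm | lef g m) G g = G [ffun => ord0] + \sum_(g : Fm | lef g m && (mon g != 0%MM)) G g.
Proof.
rewrite (bigD1 [ffun => ord0]) /=; last by apply/forallP => i; rewrite ffunE.
congr (_ + _); apply: eq_bigl => g; by rewrite mon_eq0.
Qed.

Lemma sign_mdeg (R : pzRingType) (m : 'X_{1..n}) :
  (-1) ^+ mdeg m = \prod_(i < n) (-1) ^+ (m i) :> R.
Proof.
by rewrite mdegE (big_morph (fun a => (-1 : R) ^+ a) (fun a b => exprD _ a b) (expr0 _)).
Qed.

Lemma prodsum (R : comPzRingType) (k : 'X_{1..n}) (g : Fm) (Fi : 'I_n -> nat -> R) :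
  (forall i t, (k i < t)%N -> Fi i t = 0) -> (forall i t, (t < g i)%N -> Fi i t = 0) ->
  \sum_(f : Fm | lef f k && lef g (mon f)) \prod_(i < n) Fi i (f i) =
  \prod_(i < n) \sum_(t < N.+1) Fi i t.
Proof.
move=> H1 H2.
rewrite (bigA_distr_bigA (fun i (t : 'I_N.+1) => Fi i t)).
rewrite [RHS](bigID (fun f : Fm => lef f k && lef g (mon f))) /= [X in _ = _ + X]big1 ?addr0 //.
move=> f; rewrite negb_and => /orP [/forallPn [i Hi]|/forallPn [i Hi]].
  by rewrite (bigD1 i) //= H1 ?mul0r // ltnNge.
by rewrite (bigD1 i) //= H2 ?mul0r //; move: Hi; rewrite mnmE ltnNge.
Qed.

Lemma prod_eqb (R : comPzRingType) (k : 'X_{1..n}) (g : Fm) :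
  \prod_(i < n) ((g i : nat) == k i)%:R = (mon g == k)%:R :> R.
Proof.
case: (boolP [forall i, (g i : nat) == k i]) => [/forallP H | /forallPn [i Hi]].
  have -> : mon g = k by apply/mnmP => i; rewrite mnmE; apply/eqP.
  by rewrite eqxx big1 // => i _; rewrite H.
have -> : (mon g == k) = false.
  by apply/negbTE; apply: contra Hi => /eqP <-; rewrite mnmE.
by rewrite (bigD1 i) //= (negbTE Hi) mul0r.
Qed.

Lemma scal1 (R : comRingType) (k : 'X_{1..n}) (g : Fm) : (mdeg k <= N)%N ->
  \sum_(f : Fm | lef f k && lef g (mon f))
     (mbin k (mon f))%:R * ((-1) ^+ mdeg (mon f - mon g) * (mbin (mon f) (mon g))%:R)
  = (mon g == k)%:R :> R.
Proof.
move=> kN.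
rewrite (eq_bigr (fun f : Fm => \prod_(i < n) ((-1) ^+ (f i - g i) * ('C(k i, f i) * 'C(f i, g i))%:R))); last first.
  move=> f _; rewrite sign_mdeg /mbin !natr_prod -!big_split /=.
  by apply: eq_bigr => i _; rewrite !mnmBE !mnmE natrM; ring.
rewrite (prodsum (Fi := fun i t => (-1) ^+ (t - g i) * ('C(k i, t) * 'C(t, g i))%:R)); first last.
- by move=> i t lt; rewrite /= (bin_small lt) muln0 mulr0.
- by move=> i t lt; rewrite /= (bin_small lt) mul0n mulr0.
rewrite -(prod_eqb R k g); apply: eq_bigr => i _; apply: sv1.
exact: leq_trans (coord_le k i) kN.
Qed.

Lemma scal2 (R : comRingType) (k : 'X_{1..n}) (g : Fm) : (mdeg k <= N)%N ->
  \sum_(f : Fm | lef f k && lef g (mon f))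
     ((-1) ^+ mdeg (k - mon f) * (mbin k (mon f))%:R) * (mbin (mon f) (mon g))%:R
  = (mon g == k)%:R :> R.
Proof.
move=> kN.
rewrite (eq_bigr (fun f : Fm => \prod_(i < n) ((-1) ^+ (k i - f i) * ('C(k i, f i) * 'C(f i, g i))%:R))); last first.
  move=> f _; rewrite sign_mdeg /mbin !natr_prod -!big_split /=.
  by apply: eq_bigr => i _; rewrite !mnmBE !mnmE natrM; ring.
rewrite (prodsum (Fi := fun i t => (-1) ^+ (k i - t) * ('C(k i, t) * 'C(t, g i))%:R)); first last.
- by move=> i t lt; rewrite /= (bin_small lt) muln0 mulr0.
- by move=> i t lt; rewrite /= (bin_small lt) mul0n mulr0.
rewrite -(prod_eqb R k g); apply: eq_bigr => i _; apply: sv2.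
exact: leq_trans (coord_le k i) kN.
Qed.

End FW.

Section Inv.
Variables (n N : nat) (R : comRingType) (M : lmodType R).
Local Notation Fm := {ffun 'I_n -> 'I_N.+1}.

Lemma pick_k (k : 'X_{1..n}) (Y : 'X_{1..n} -> M) : (mdeg k <= N)%N ->
  \sum_(g : Fm | lef g k) (mon g == k)%:R *: Y (mon g) = Y k.
Proof.
move=> kN.
have gkE : mon ([ffun i => inord (k i)] : Fm) = k.
  apply/mnmP => i; rewrite mnmE ffunE inordK // ltnS; exact: leq_trans (coord_le k i) kN.
rewrite (bigD1 ([ffun i => inord (k i)] : Fm)) /=; last by rewrite lefE gkE lepm_refl.
rewrite gkE eqxx scale1r big1 ?addr0 // => g /andP [_ ne].
have -> : (mon g == k) = false.
  by apply/negbTE; apply: contra ne => /eqP e; apply/eqP; apply/ffunP => i;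
     apply: val_inj; rewrite ffunE /= -e mnmE inordK.
by rewrite scale0r.
Qed.

Lemma lef_trans (k : 'X_{1..n}) (f g : Fm) : lef f k -> lef g (mon f) -> lef g k.
Proof. rewrite !lefE => h1 h2; exact: lepm_trans h2 h1. Qed.

Lemma inv1 (k : 'X_{1..n}) (Y : 'X_{1..n} -> M) : (mdeg k <= N)%N ->
  \sum_(f : Fm | lef f k) (mbin k (mon f))%:R *:
     \sum_(g : Fm | lef g (mon f))
        (((-1) ^+ mdeg (mon f - mon g) * (mbin (mon f) (mon g))%:R) *: Y (mon g))
  = Y k.
Proof.
move=> kN.
under eq_bigr do rewrite scaler_sumr.
rewrite (exchange_big_dep (fun g => lef g k)) /=; last exact: lef_trans.
rewrite -[RHS](pick_k Y kN); apply: eq_bigr => g _.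
under eq_bigr do rewrite scalerA.
by rewrite -scaler_suml scal1.
Qed.

Lemma inv2 (k : 'X_{1..n}) (Y : 'X_{1..n} -> M) : (mdeg k <= N)%N ->
  \sum_(f : Fm | lef f k) ((-1) ^+ mdeg (k - mon f) * (mbin k (mon f))%:R) *:
     \sum_(g : Fm | lef g (mon f)) ((mbin (mon f) (mon g))%:R *: Y (mon g))
  = Y k.
Proof.
move=> kN.
under eq_bigr do rewrite scaler_sumr.
rewrite (exchange_big_dep (fun g => lef g k)) /=; last exact: lef_trans.
rewrite -[RHS](pick_k Y kN); apply: eq_bigr => g _.
under eq_bigr do rewrite scalerA.
by rewrite -scaler_suml scal2.
Qed.

End Inv.

Section Lin.
Variables (F : fieldType) (U B : lmodType F) (g : U -> B) (H : is_lin g).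
Lemma lin0 : g 0 = 0.
Proof.
have e := H 1 0 0; rewrite !scale1r addr0 in e.
by apply/(addrI (g 0)); rewrite addr0 -e.
Qed.
Lemma linD x y : g (x + y) = g x + g y.
Proof. by have := H 1 x y; rewrite !scale1r. Qed.
Lemma linZ a x : g (a *: x) = a *: g x.
Proof. by have := H a x 0; rewrite !addr0 lin0 addr0. Qed.
Lemma linsum (I : Type) (r : seq I) (P : pred I) (G : I -> U) :
  g (\sum_(i <- r | P i) G i) = \sum_(i <- r | P i) g (G i).
Proof. exact: (big_morph g linD lin0). Qed.
End Lin.

Section Hom.
Variables (F : fieldType) (A B : algType F) (h : A -> B) (H : is_alg_hom h).
Lemma hom_lin : is_lin h. Proof. by case: H. Qed.
Lemma hom1 : h 1 = 1. Proof. by case: H. Qed.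
Lemma homM x y : h (x * y) = h x * h y. Proof. by case: H. Qed.
Lemma homnat c : h (c%:R) = c%:R.
Proof.
elim: c => [|c IH]; first exact: (lin0 hom_lin).
by rewrite !mulrS (linD hom_lin) hom1 IH.
Qed.
End Hom.

Lemma hom_comp (F : fieldType) (A B C : algType F) (h1 : A -> B) (h2 : B -> C) :
  is_alg_hom h1 -> is_alg_hom h2 -> is_alg_hom (h2 \o h1).
Proof.
move=> [a1 b1 c1] [a2 b2 c2]; split => /=.
- by rewrite a1 a2.
- by move=> x y; rewrite b1 b2.
- by move=> a x y; rewrite c1 c2.
Qed.

Lemma hom_id (F : fieldType) (A : algType F) : is_alg_hom (@id A).
Proof. by split. Qed.

Lemma natZ (F : fieldType) (A : algType F) c (x : A) : c%:R * x = (c%:R : F) *: x.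
Proof. by rewrite mulr_natl scaler_nat. Qed.

Section Mon.
Variables (R : nzRingType) (n : nat) (Y : 'I_n -> R).
Lemma Xmon0 : Xmon Y 0%MM = 1.
Proof. by rewrite /Xmon big1 // => i _; rewrite mnm0E expr0. Qed.
End Mon.

Lemma XmonU (R : nzRingType) n (Y : 'I_n -> R) p : Xmon Y U_(p)%MM = Y p.
Proof.
rewrite /Xmon (eq_bigr (fun i => if i == p then Y p else 1)); last first.
  by move=> i _; rewrite mnm1E eq_sym; case: eqP => [->|_]; rewrite ?expr1 ?expr0.
by rewrite -big_mkcond big_pred1_eq.
Qed.

Lemma embAX (F : fieldType) n (R : algType F) (Y : 'I_n -> R) r :
  embA Y 'X_[r] = Xmon Y r.
Proof. by rewrite /embA msuppX big_seq1 mcoeffX eqxx scale1r. Qed.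

Lemma prod0 (R : comNzRingType) n (m : 'X_{1..n}) :
  \prod_(i < n) (0 : R) ^+ (m i) = (m == 0%MM)%:R.
Proof.
case: (boolP [forall i, m i == 0%N]) => [/forallP H | /forallPn [i Hi]].
  have -> : m = 0%MM by apply/mnmP => i; rewrite mnm0E; apply/eqP.
  by rewrite eqxx big1 // => i _; rewrite mnm0E expr0.
have -> : (m == 0%MM) = false.
  by apply/negbTE; apply: contra Hi => /eqP ->; rewrite mnm0E.
by rewrite (bigD1 i) //= expr0n (negbTE Hi) mul0r.
Qed.

Lemma meval0E (F : fieldType) n (q : {mpoly F[n]}) : q.@[fun _ => 0] = q@_0%MM.
Proof.
rewrite mevalE; transitivity ((\sum_(m <- msupp q) q@_m *: 'X_[m])@_0%MM); last by rewrite -mpolyE.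
rewrite (big_morph (fun p : {mpoly F[n]} => p@_0%MM) (mcoeffD 0%MM) (mcoeff0 F 0%MM)).
by apply: eq_bigr => m _; rewrite mcoeffZ mcoeffX prod0.
Qed.

Lemma vanish_vfm (F : fieldType) n (m : 'X_{1..n}) p : m != 0%MM -> vanish0 (vfm (F := F) m p).
Proof.
move=> nz i; rewrite /vfm ffunE; case: eqP => _; last exact: meval0.
by rewrite mevalX prod0 (negbTE nz).
Qed.

Lemma vanishD (F : fieldType) n (e x : VF F n) : vanish0 e -> vanish0 x -> vanish0 (e + x).
Proof. by move=> h1 h2 i; rewrite ffunE mevalD h1 h2 addr0. Qed.

Lemma vanishZ (F : fieldType) n a (e : VF F n) : vanish0 e -> vanish0 (a *: e).
Proof. by move=> h1 i; rewrite ffunE mevalZ h1 mulr0. Qed.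

Lemma vanish_0 (F : fieldType) n : vanish0 (0 : VF F n).
Proof. by move=> i; rewrite ffunE meval0. Qed.

Lemma vanish_sum (F : fieldType) n (I : Type) (r : seq I) (P : pred I) (G : I -> VF F n) :
  (forall i, P i -> vanish0 (G i)) -> vanish0 (\sum_(i <- r | P i) G i).
Proof.
move=> H; elim/big_rec: _ => [|i x Pi hx]; first exact: vanish_0.
by apply: vanishD => //; apply: H.
Qed.

Lemma VFdecomp (F : fieldType) n (e : VF F n) :
  e = \sum_(p < n) \sum_(m <- msupp (e p)) (e p)@_m *: vfm m p.
Proof.
apply/ffunP => i; rewrite sum_ffunE (bigD1 i) //= [X in _ + X]big1 ?addr0.
  rewrite sum_ffunE {1}(mpolyE (e i)); apply: eq_bigr => m _.
  by rewrite !ffunE eqxx.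
move=> p ne; rewrite sum_ffunE big1 // => m _.
by rewrite !ffunE eq_sym (negbTE ne) scaler0.
Qed.

Lemma VFdecomp0 (F : fieldType) n (e : VF F n) : vanish0 e ->
  e = \sum_(p < n) \sum_(m <- msupp (e p)) (if m == 0%MM then 0 else (e p)@_m *: vfm m p).
Proof.
move=> v; rewrite {1}(VFdecomp e); apply: eq_bigr => p _; apply: eq_bigr => m _.
case: eqP => // ->.
by have := v p; rewrite meval0E => ->; rewrite scale0r.
Qed.


Unset Implicit Arguments.
Set Strict Implicit.
Set Printing Implicit Defensive.

Lemma subm_add n (k f g : 'X_{1..n}) : (g <= f)%MM -> (f <= k)%MM ->
  (k - f + (f - g))%MM = (k - g)%MM.
Proof.
move=> /mnm_lepP h1 /mnm_lepP h2; apply/mnmP => i; rewrite !(mnmDE, mnmBE).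
have := h1 i; have := h2 i; lia.
Qed.

Lemma submm n (k : 'X_{1..n}) : (k - k)%MM = 0%MM.
Proof. by apply/mnmP => i; rewrite mnmBE mnm0E subnn. Qed.

Lemma lem0 n (m : 'X_{1..n}) : (m <= 0)%MM -> m = 0%MM.
Proof.
move=> /mnm_lepP h; apply/mnmP => i; have := h i; rewrite mnm0E leqn0 => /eqP //.
Qed.

Lemma mbin0 n (k : 'X_{1..n}) : mbin k 0%MM = 1%N.
Proof. by rewrite /mbin big1 // => i _; rewrite mnm0E bin0. Qed.

Lemma monf0 n N : mon ([ffun => ord0] : {ffun 'I_n -> 'I_N.+1}) = 0%MM.
Proof. by apply/eqP; rewrite mon_eq0. Qed.

Theorem lemma3p5 (F : closedFieldType) (charF0 : [pchar F] =i pred0) (n : nat)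
    (S : algType F) (iA : {mpoly F[n]} -> S) (iV : VF F n -> S)
    (T : algType F) (X P : 'I_n -> T) (jL : VF F n -> T)
    (HS : is_smash_product iA iV) (HT : is_weyl_tensor_UL X P jL)
    (phi : S -> T) (psi : T -> S)
    (Hphi : is_alg_hom phi) (Hpsi : is_alg_hom psi)
    (phiA : forall f, phi (iA f) = embA X f)
    (phiV : forall (k : 'X_{1..n}) (p : 'I_n),
       phi (iV (vfm k p)) =
         Xmon X k * P p +
         \sum_(m : 'X_{1..n < (mdeg k).+1} | ((m <= k)%MM && (bmnm m != 0%MM)))
            (mbin k m)%:R * (Xmon X (k - m)%MM * jL (vfm (bmnm m) p)))
    (psiD : forall r s : 'X_{1..n},
       psi (Xmon X r * Xmon P s) = iA 'X_[r] * Xmon (fun i => iV (vfm 0%MM i)) s)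
    (psiL : forall (m : 'X_{1..n}) (p : 'I_n), m != 0%MM ->
       psi (jL (vfm m p)) =
         \sum_(k : 'X_{1..n < (mdeg m).+1} | (k <= m)%MM)
            (((-1) ^+ mdeg (m - k)%MM * (mbin m k)%:R : F)
               *: (iA 'X_[(m - k)%MM] * iV (vfm (bmnm k) p)))) :
  (forall s, psi (phi s) = s) /\ (forall t, phi (psi t) = t).
Proof.
have phiLin := hom_lin Hphi; have psiLin := hom_lin Hpsi.
have [HSrel HSu] := HS; have [HiA HiV HbrV HcomV] := HSrel.
have [HTrel HTu] := HT; have [_ _ jLlin _ _] := HTrel.
have iALin := hom_lin HiA.
have phiX : forall r, phi (iA 'X_[r]) = Xmon X r by move=> r; rewrite phiA embAX.
have XmonD : forall a b, Xmon X a * Xmon X b = Xmon X (a + b)%MM.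
  by move=> a b; rewrite -!phiX -(homM Hphi) -(homM HiA) mpolyXD.
have psiX : forall r, psi (Xmon X r) = iA 'X_[r].
  by move=> r; have := psiD r 0%MM; rewrite !Xmon0 !mulr1.
have iAD : forall a b, iA 'X_[a] * iA 'X_[b] = iA 'X_[(a + b)%MM].
  by move=> a b; rewrite -(homM HiA) mpolyXD.
have iA1 : iA 1 = 1 := hom1 HiA.
have phiV0 : forall p, phi (iV (vfm 0%MM p)) = P p.
  move=> p; rewrite phiV Xmon0 mul1r big_pred0 ?addr0 // => m.
  by apply/negbTE; rewrite negb_and; case: (boolP (bmnm m <= 0)%MM) => // /lem0 ->; rewrite eqxx.
have keyA : forall k p, psi (phi (iV (vfm k p))) = iV (vfm k p).
  move=> k p.
  rewrite phiV (linD psiLin).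
  have -> : Xmon X k * P p = Xmon X k * Xmon P U_(p)%MM by rewrite XmonU.
  rewrite psiD XmonU (linsum psiLin).
  under eq_bigr do rewrite natZ (linZ psiLin) (homM Hpsi) psiX.
  rewrite (convQ (d := mdeg k) (N := mdeg k) (fun m => m != 0%MM)
     (fun m => (mbin k m)%:R *: (iA 'X_[(k - m)%MM] * psi (jL (vfm m p))))) //=.
  pose Y j := iA 'X_[(k - j)%MM] * iV (vfm j p).
  have -> : iV (vfm k p) = Y k by rewrite /Y submm mpolyX0 iA1 mul1r.
  rewrite -(inv1 (N := mdeg k) Y (leqnn _)) split0 monf0 mbin0 scale1r.
  congr (_ + _).
    rewrite split0 (_ : mon _ = 0%MM); last by apply/eqP; rewrite mon_eq0.
    rewrite big_pred0; last first.
      by move=> g; apply/negbTE; rewrite negb_and lefE; case: (boolP (mon g <= 0)%MM) => // /lem0 ->; rewrite eqxx.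
    by rewrite addr0 submm mdeg0 expr0 mul1r mbin0 scale1r /Y subm0.
  apply: eq_bigr => f /andP [lf nz].
  rewrite psiL //.
  rewrite (conv (d := mdeg (mon f)) (N := mdeg k)
     (fun j => ((-1) ^+ mdeg (mon f - j)%MM * (mbin (mon f) j)%:R : F)
               *: (iA 'X_[(mon f - j)%MM] * iV (vfm j p)))) //; last by apply: mdeg_le; rewrite -lefE.
  congr (_ *: _); rewrite mulr_sumr; apply: eq_bigr => g lg.
  rewrite -scalerAr mulrA iAD subm_add //; by rewrite -lefE.
have keyB : forall m p, m != 0%MM -> phi (psi (jL (vfm m p))) = jL (vfm m p).
  move=> m p nz.
  rewrite psiL // (conv (d := mdeg m) (N := mdeg m)
     (fun j => ((-1) ^+ mdeg (m - j)%MM * (mbin m j)%:R : F)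
               *: (iA 'X_[(m - j)%MM] * iV (vfm j p)))) // (linsum phiLin).
  under eq_bigr do rewrite (linZ phiLin) (homM Hphi) phiX.
  pose Y j := Xmon X (m - j)%MM * (if j == 0%MM then P p else jL (vfm j p)).
  have -> : jL (vfm m p) = Y m by rewrite /Y submm Xmon0 mul1r (negbTE nz).
  rewrite -(inv2 (N := mdeg m) Y (leqnn _)); apply: eq_bigr => f lf.
  congr (_ *: _).
  rewrite phiV (convQ (d := mdeg (mon f)) (N := mdeg m) (fun j => j != 0%MM)
     (fun j => (mbin (mon f) j)%:R * (Xmon X (mon f - j)%MM * jL (vfm j p)))) //;
     last by apply: mdeg_le; rewrite -lefE.
  rewrite split0 mulrDr (_ : mon ([ffun => ord0] : {ffun 'I_n -> 'I_(mdeg m).+1}) = 0%MM); last by apply/eqP; rewrite mon_eq0.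
  congr (_ + _).
    rewrite mbin0 scale1r /Y eqxx subm0 mulrA XmonD submK //; by rewrite -lefE.
  rewrite mulr_sumr; apply: eq_bigr => g /andP [lg gnz].
  rewrite natZ -scalerAr mulrA XmonD subm_add; first by rewrite /Y (negbTE gnz).
    by rewrite -lefE.
  by rewrite -lefE.
have jL0 : jL 0 = 0.
  have e := jLlin 1 0 0 (@vanish_0 _ _) (@vanish_0 _ _); rewrite !scale1r addr0 in e.
  by apply/(addrI (jL 0)); rewrite addr0 -e.
have jLD : forall e x, vanish0 e -> vanish0 x -> jL (e + x) = jL e + jL x.
  by move=> e x ve vx; have := jLlin 1 e x ve vx; rewrite !scale1r.
have jLZ : forall a e, vanish0 e -> jL (a *: e) = a *: jL e.
  by move=> a e ve; have := jLlin a e 0 ve (@vanish_0 _ _); rewrite !addr0 jL0 addr0.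
have jLsum : forall (I : Type) (r : seq I) (Pr : pred I) (G : I -> VF F n),
    (forall i, Pr i -> vanish0 (G i)) ->
    jL (\sum_(i <- r | Pr i) G i) = \sum_(i <- r | Pr i) jL (G i).
  move=> I r Pr G HG; elim: r => [|x r IH]; first by rewrite !big_nil jL0.
  rewrite !big_cons; case: (boolP (Pr x)) => // Px.
  by rewrite jLD ?IH //; [apply: HG | apply: vanish_sum].
split.
  have [_ U] := HSu S iA iV HSrel.
  move=> s; apply: (U (psi \o phi) id (hom_comp Hphi Hpsi) (@hom_id _ S)) => //= [f|e].
    rewrite phiA /embA (linsum psiLin) [in RHS](mpolyE f) (linsum iALin).
    by apply: eq_bigr => m _; rewrite (linZ psiLin) psiX (linZ iALin).
  rewrite (VFdecomp e) !(linsum HiV) (linsum phiLin) (linsum psiLin).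
  apply: eq_bigr => q _; rewrite !(linsum HiV) (linsum phiLin) (linsum psiLin).
  by apply: eq_bigr => m _; rewrite !(linZ HiV) (linZ phiLin) (linZ psiLin) keyA.
have [_ U] := HTu T X P jL HTrel.
move=> t; apply: (U (phi \o psi) id (hom_comp Hpsi Hphi) (@hom_id _ T)) => //= [i|i|e v].
- have E : X i = Xmon X U_(i)%MM * Xmon P 0%MM by rewrite XmonU Xmon0 mulr1.
  by rewrite {1}E psiD Xmon0 mulr1 phiX XmonU.
- have E : P i = Xmon X 0%MM * Xmon P U_(i)%MM by rewrite XmonU Xmon0 mul1r.
  by rewrite {1}E psiD XmonU mpolyX0 iA1 mul1r phiV0.
rewrite (VFdecomp0 v) jLsum; last first.
  move=> q _; apply: vanish_sum => m _; case: eqP => [_|/eqP nz]; first exact: vanish_0.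
  by apply: vanishZ; apply: vanish_vfm.
rewrite (linsum psiLin) (linsum phiLin); apply: eq_bigr => q _.
rewrite jLsum; last first.
  move=> m _; case: eqP => [_|/eqP nz]; first exact: vanish_0.
  by apply: vanishZ; apply: vanish_vfm.
rewrite (linsum psiLin) (linsum phiLin); apply: eq_bigr => m _.
case: eqP => [_|/eqP nz]; first by rewrite jL0 (lin0 psiLin) (lin0 phiLin).
by rewrite jLZ ?(linZ psiLin) ?(linZ phiLin) ?keyB //; apply: vanish_vfm.
Qed.
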